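(* For all integers $0\le k\le n$ and all $x$, the Euler polynomials satisfy \[ \sum_{j=0}^{n-k}\binom{n-k}{j}(-1)^{j}E_{j+k}(x)=(-1)^{n+k+1}\sum_{j=0}^{k}\binom{k}{j}E_{n-j}(x)+2x^{k}(1-x)^{n-k}. \]
   Context: The Euler polynomials are defined by $\sum_{n\ge0}E_n(x)\frac{t^n}{n!}=\frac{2e^{xt}}{e^t+1}$. *)

(* Defs.v *)
From HB Require Import structures.
From mathcomp Require Import all_boot all_order all_algebra.
Set Implicit Arguments. Unset Strict Implicit. Unset Printing Implicit Defensive.
Import Order.TTheory GRing.Theory Num.Theory.
Local Open Scope ring_scope.

(* The defining identity
     sum_n E_n(x) t^n/n! = 2 e^{xt} / (e^t + 1)
   is, coefficientwise in t (multiply both sides by e^t + 1 and compare the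
   coefficient of t^n/n!), equivalent to
     E_n + sum_{k=0}^{n} C(n,k) E_k = 2 X^n   for all n,
   i.e.  E_n = X^n - 1/2 * sum_{k<n} C(n,k) E_k. *)
Fixpoint euler_seq (R : numFieldType) (n : nat) : seq {poly R} :=
  match n with
  | 0 => [:: 1]
  | n'.+1 =>
      let s := euler_seq R n' in
      rcons s ('X^n - 2^-1 *: \sum_(k < n) ('C(n, k))%:R *: s`_k)
  end.

Definition euler (R : numFieldType) (n : nat) : {poly R} := (euler_seq R n)`_n.

(* Main.v *)
Require Import Defs.
From HB Require Import structures.
From mathcomp Require Import all_boot all_order all_algebra.
From mathcomp Require Import ring zify.
Import Order.TTheory GRing.Theory Num.Theory.
Local Open Scope ring_scope.

Set Implicit Arguments.
Section Aux.
Variable R : numFieldType.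
Variable x : R.

Lemma euler_seq_size n : size (euler_seq R n) = n.+1.
Proof. by elim: n => [|n IH] //=; rewrite size_rcons IH. Qed.

Lemma euler_seq_nth n k : (k <= n)%N -> (euler_seq R n)`_k = euler R k.
Proof.
elim: n k => [|n IH] k.
  by rewrite leqn0 => /eqP ->.
rewrite leq_eqVlt => /orP [/eqP -> //|hk].
rewrite /= nth_rcons euler_seq_size hk; exact: IH.
Qed.

  Lemma euler_rec n : euler R n.+1 =
  'X^(n.+1) - 2^-1 *: \sum_(k < n.+1) ('C(n.+1, k))%:R *: euler R k.
Proof.
rewrite /euler /= nth_rcons euler_seq_size ltnn eqxx.
congr (_ - _ *: _); apply: eq_bigr => i _.
by rewrite euler_seq_nth // -ltnS.
Qed.

Definition e i := (euler R i).[x].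

Lemma euler_rec_eval N :
  e N + \sum_(i < N.+1) ('C(N, i))%:R * e i = 2 * x ^+ N.
Proof.
rewrite big_ord_recr /= binn mul1r.
case: N => [|N].
  by rewrite big_ord0 /e /euler /= hornerC add0r mulr1.
rewrite /e euler_rec hornerD hornerN hornerZ hornerXn.
rewrite horner_sum.
rewrite (eq_bigr (fun i : 'I_N.+1 => 'C(N.+1,i)%:R * (euler R i).[x])); last first.
  by move=> i _; rewrite hornerZ.
set S := \sum_(i < N.+1) _.
have h2 : (2 : R) != 0 by rewrite pnatr_eq0.
have hS : S = 2^-1 * S + 2^-1 * S.
  rewrite -mulrDl -{1}(mul1r S); congr (_ * _).
  rewrite -mulr2n; have -> : (2^-1 : R) *+ 2 = 2^-1 * 2 by rewrite mulr_natr.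
  by rewrite mulVf.
rewrite {2}hS; ring.
Qed.

Definition L (p : {poly R}) := \sum_(i < size p) p`_i * e i.

Lemma L_bound (p : {poly R}) N : (size p <= N)%N -> L p = \sum_(i < N) p`_i * e i.
Proof.
move=> hN; rewrite /L (big_ord_widen _ (fun i => p`_i * e i) hN).
rewrite big_mkcond /=; apply: eq_bigr => i _.
case: ifP => // /negbT; rewrite -leqNgt => hi.
by rewrite nth_default // mul0r.
Qed.

Lemma L0 : L 0 = 0.
Proof. by rewrite /L size_poly0 big_ord0. Qed.

Lemma LD (p q : {poly R}) : L (p + q) = L p + L q.
Proof.
pose N := maxn (size p) (size q).
rewrite (@L_bound _ N) ?(leq_trans (size_polyD _ _)) //.
rewrite (@L_bound p N) ?leq_maxl //.
rewrite (@L_bound q N) ?leq_maxr //.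
rewrite -big_split /=; apply: eq_bigr => i _; by rewrite coefD mulrDl.
Qed.

Lemma LZ c (p : {poly R}) : L (c *: p) = c * L p.
Proof.
rewrite (@L_bound _ (size p)) ?size_scale_leq // /L mulr_sumr.
by apply: eq_bigr => i _; rewrite coefZ mulrA.
Qed.

Lemma Lsum (I : Type) (r : seq I) (P : pred I) (F : I -> {poly R}) :
  L (\sum_(i <- r | P i) F i) = \sum_(i <- r | P i) L (F i).
Proof. exact: (big_morph L LD L0). Qed.

Lemma LXn N : L 'X^N = e N.
Proof.
rewrite /L size_polyXn big_ord_recr /= coefXn eqxx mul1r big1 ?add0r //.
by move=> i _; rewrite coefXn ltn_eqF // mul0r.
Qed.

Lemma LXn1 N : L 'X^N + L (('X + 1) ^+ N) = 2 * x ^+ N.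
Proof.
rewrite LXn -euler_rec_eval (addrC 'X) exprDn Lsum; congr (_ + _).
apply: eq_bigr => i _.
by rewrite expr1n mul1r -scaler_nat LZ LXn.
Qed.

Lemma Lkey (q : {poly R}) : L q + L (q \Po ('X + 1)) = 2 * q.[x].
Proof.
rewrite -{1}(comp_polyXr q) !comp_polyE horner_coef !Lsum -big_split mulr_sumr /=.
apply: eq_bigr => i _.
by rewrite !LZ -mulrDr LXn1 mulrCA.
Qed.

End Aux.

Theorem mainTheorem5 (R : numFieldType) (n k : nat) (x : R) :
  (k <= n)%N ->
  \sum_(j < (n - k).+1) ('C(n - k, j))%:R * (-1) ^+ j * (euler R (j + k)).[x]
  = (-1) ^+ (n + k + 1) * \sum_(j < k.+1) ('C(k, j))%:R * (euler R (n - j)).[x]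
    + 2 * x ^+ k * (1 - x) ^+ (n - k).
Proof.
move=> hkn.
set m := (n - k)%N.
pose p : {poly R} := 'X^k * (1 - 'X) ^+ m.
have hp : p = \sum_(j < m.+1) (('C(m, j))%:R * (-1) ^+ j) *: 'X^(j + k).
  rewrite /p exprDn mulr_sumr; apply: eq_bigr => j _.
  rewrite expr1n mul1r -scaler_nat -!mul_polyC polyCM.
  have -> : ((-1) ^+ j)%:P = (-1) ^+ j :> {poly R} by rewrite (rmorphXn polyC) rmorphN1.
  rewrite (exprNn 'X) exprD; ring.
have hq : p \Po ('X + 1) =
    \sum_(j < k.+1) ((-1) ^+ m * ('C(k, j))%:R) *: 'X^(n - j).
  have cX : forall (q : {poly R}) i, q ^+ i \Po ('X + 1) = (q \Po ('X + 1)) ^+ i.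
    by move=> q i; elim: i => [|i IH]; rewrite ?expr0 ?comp_polyC // !exprS comp_polyM IH.
  rewrite /p comp_polyM !cX comp_polyX comp_polyB comp_polyX comp_polyC.
  have -> : 1%:P - ('X + 1) = - 'X :> {poly R} by rewrite polyC1; ring.
  rewrite exprDn mulr_suml; apply: eq_bigr => j _.
  have -> : (n - j = m + (k - j))%N by rewrite /m; have := ltn_ord j; lia.
  rewrite expr1n mulr1 -scaler_nat -!mul_polyC polyCM.
  have -> : ((-1) ^+ m)%:P = (-1) ^+ m :> {poly R} by rewrite (rmorphXn polyC) rmorphN1.
  rewrite (exprNn 'X) exprD; ring.
have hpx : p.[x] = x ^+ k * (1 - x) ^+ m.
  by rewrite /p hornerM hornerXn horner_exp hornerD hornerN hornerC hornerX.
have := Lkey x p.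
rewrite hpx.
rewrite hq hp !Lsum.
rewrite (eq_bigr (fun j : 'I_m.+1 => ('C(m, j))%:R * (-1) ^+ j * (euler R (j + k)).[x])); last first.
  by move=> j _; rewrite LZ LXn.
rewrite (eq_bigr (fun j : 'I_k.+1 => (-1) ^+ m * (('C(k, j))%:R * (euler R (n - j)).[x]))); last first.
  by move=> j _; rewrite LZ LXn mulrA.
rewrite -mulr_sumr => H.
have -> : (n + k + 1 = m + 1 + k * 2)%N by rewrite /m; lia.
rewrite exprD exprD mulnC exprM.
have -> : (-1 : R) ^+ 2 = 1 by rewrite expr2 mulrN1 opprK.
rewrite expr1n expr1.
rewrite -[2 * x ^+ k * _]mulrA -H; ring.
Qed.
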